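(* Let $(X,\alpha)$ and $(Y,\beta)$ be Cantor minimal systems and let $\phi:X\to\operatorname{Isom}(\mathbb{T})$, $\psi:Y\to\operatorname{Isom}(\mathbb{T})$ be continuous maps. Let $\mathcal{P}=\{X(v,k):v\in V,1\le k\le h(v)\}$ and $\mathcal{Q}=\{Y(w,l):w\in W,1\le l\le h(w)\}$ be Kakutani–Rohlin partitions for $(X,\alpha)$ and $(Y,\beta)$ respectively, such that $o(\phi)$ is constant on each member of $\mathcal{P}$ and $o(\psi)$ is constant on each member of $\mathcal{Q}$. Suppose $\pi:\mathcal{Q}\to\mathcal{P}$ is a bijection such that (1) $\pi(Y(w,l+1))=\alpha(\pi(Y(w,l)))$ for all $w\in W$ and $1\le l\le h(w)-1$; (2) for every $v\in V$, $o(\phi)_v=\sum o(\psi)_w$, the sum running over all $w\in W$ such that $\pi(Y(w,1))$ belongs to the tower $v$ (i.e. equals $X(v,k)$ for some $k$). Then there exist a homeomorphism $\sigma:X\to Y$ and a continuous map $\omega:X\to\operatorname{Isom}(\mathbb{T})$ such that $\sigma(\pi(U))=U$ for all $U\in\mathcal{Q}$ and \[ \max_{x\in X}\max_{t\in\mathbb{T}}\big|\psi_{\sigma(x)}\omega_x(t)-\omega_{\alpha(x)}\phi_x(t)\big|<\max_{v\in V}h(v)^{-1}. \]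
   Context: A Cantor minimal system $(X,\alpha)$ is a Cantor set $X$ with a homeomorphism $\alpha$ having no nontrivial closed invariant subsets. $\mathbb{T}=\mathbb{R}/\mathbb{Z}$, and for $s,t\in\mathbb{T}$, $|s-t|$ is the distance from $s-t$ to $0$ in $\mathbb{T}$. $\operatorname{Isom}(\mathbb{T})=\{R_t\}\cup\{R_t\lambda\}$ where $R_t(s)=s+t$, $\lambda(s)=-s$, with the uniform topology. $o(\phi):X\to\mathbb{Z}_2$ is $0$ at $x$ if $\phi_x$ preserves orientation and $1$ otherwise. A Kakutani–Rohlin partition for $(X,\alpha)$ is a partition of $X$ into nonempty clopen sets $X(v,k)$, indexed by a finite set $V$ and $1\le k\le h(v)$, with $\alpha(X(v,k))=X(v,k+1)$ for $1\le k<h(v)$; the sets $X(v,1),\dots,X(v,h(v))$ form the tower $v$ of height $h(v)$. When $o(\phi)$ is constant on each member of $\mathcal{P}$, $o(\phi)_v\in\mathbb{Z}_2$ denotes $\sum_{i=0}^{h(v)-1}o(\phi)(\alpha^i(x))$ for any $x\in X(v,1)$ (independent of $x$); $o(\psi)_w$ is defined analogously. *)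

(* Defs.v *)
From HB Require Import structures.
From mathcomp Require Import all_boot all_order all_algebra.
From mathcomp Require Import all_classical all_reals all_analysis.
Set Implicit Arguments. Unset Strict Implicit. Unset Printing Implicit Defensive.
Import Order.TTheory GRing.Theory Num.Theory.
Import numFieldNormedType.Exports.
Local Open Scope classical_set_scope.
Local Open Scope ring_scope.

Definition distT (R : realType) (s t : R) : R :=
  inf [set `|s - t - n%:~R| | n in [set: int]].

(* IsomT t false is R_t (s |-> s + t); IsomT t true is R_t lambda (s |-> t - s). *)
Record isomT (R : realType) := IsomT { rot : R ; refl : bool }.

Definition isom_app (R : realType) (g : isomT R) (s : R) : R :=
  if refl g then rot g - s else rot g + s.

Definition isom_dist (R : realType) (g g' : isomT R) : R :=
  sup [set distT (isom_app g s) (isom_app g' s) | s in [set: R]].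

Definition isom_continuous (R : realType) (X : topologicalType)
    (phi : X -> isomT R) : Prop :=
  forall x (e : R), 0 < e -> \forall y \near x, isom_dist (phi y) (phi x) < e.

(* o(phi)(x) : false = 0 (orientation preserving), true = 1 *)
Definition orient (R : realType) (X : Type) (phi : X -> isomT R) (x : X) : bool :=
  refl (phi x).

Definition cantor_set (R : realType) (X : pseudoMetricType R) : Prop :=
  [set: X] !=set0 /\ cantor_like X.

Definition homeomorphism (X Y : topologicalType) (f : X -> Y) : Prop :=
  exists g : Y -> X, [/\ cancel f g, cancel g f, continuous f & continuous g].

Definition minimal_homeo (X : topologicalType) (a : X -> X) : Prop :=
  homeomorphism a /\
  forall C : set X, closed C -> a @` C = C -> C = set0 \/ C = [set: X].

Definition cantor_minimal_system (R : realType) (X : pseudoMetricType R)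
    (a : X -> X) : Prop :=
  cantor_set X /\ minimal_homeo a.

Definition KR_partition (X : topologicalType) (a : X -> X) (V : finType)
    (h : V -> nat) (P : V -> nat -> set X) : Prop :=
  [/\ forall v, (0 < h v)%N,
      forall v k, (1 <= k <= h v)%N -> [/\ open (P v k), closed (P v k) & P v k !=set0],
      forall v k v' k', (1 <= k <= h v)%N -> (1 <= k' <= h v')%N ->
        P v k `&` P v' k' !=set0 -> v = v' /\ k = k',
      forall x, exists v k, (1 <= k <= h v)%N /\ P v k x
    & forall v k, (1 <= k < h v)%N -> a @` P v k = P v k.+1].

Definition orient_constant (R : realType) (X : Type) (phi : X -> isomT R)
    (V : finType) (h : V -> nat) (P : V -> nat -> set X) : Prop :=
  forall v k, (1 <= k <= h v)%N -> forall x y, P v k x -> P v k y ->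
    orient phi x = orient phi y.

(* o(phi)_v computed from a point x of X(v,1): sum in Z_2 (xor) *)
Definition orient_tower (R : realType) (X : Type) (phi : X -> isomT R)
    (a : X -> X) (n : nat) (x : X) : bool :=
  \big[addb/false]_(i < n) orient phi (iter i a x).

(* Main.v *)
Require Import Defs.
From HB Require Import structures.
From mathcomp Require Import all_boot all_order all_algebra.
From mathcomp Require Import all_classical all_reals all_analysis.
From mathcomp Require Import ring lra finmap zify.
Import Order.TTheory GRing.Theory Num.Theory.
Import numFieldNormedType.Exports.
Local Open Scope classical_set_scope.
Local Open Scope ring_scope.

Module P1.
Set Implicit Arguments. Unset Strict Implicit. Unset Printing Implicit Defensive.
Import Order.TTheory GRing.Theory Num.Theory.
Import numFieldNormedType.Exports.
Local Open Scope classical_set_scope.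
Local Open Scope ring_scope.
Local Notation rot := Defs.rot.

Section DT.
Variable R : realType.
Implicit Types x y : R.

Definition dT x := distT x 0.
Definition DS x := [set `|x - n%:~R| | n in [set: int]].

Lemma DS_n0 x : DS x !=set0.
Proof. by exists `|x - 0%:~R|; exists 0. Qed.

Lemma DS_lb x : has_lbound (DS x).
Proof. by exists 0 => _ [n _ <-]. Qed.

Lemma dTE x : dT x = inf (DS x).
Proof.
rewrite /dT /distT /DS; congr inf; apply/seteqP; split => _ [n _ <-]; exists n => //;
by rewrite subr0.
Qed.

Lemma distTE s t : distT s t = dT (s - t).
Proof. by rewrite /dT /distT subr0. Qed.

Lemma dT_ge0 x : 0 <= dT x.
Proof. by rewrite dTE; apply: lb_le_inf; [exact: DS_n0| move=> _ [n _ <-]]. Qed.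

Lemma dT_le x (n : int) : dT x <= `|x - n%:~R|.
Proof. by rewrite dTE; apply: ge_inf; [exact: DS_lb| exists n]. Qed.

Lemma dT_le_abs x : dT x <= `|x|.
Proof. by have := dT_le x 0; rewrite subr0. Qed.

Lemma dT_lt x e : dT x < e -> exists n : int, `|x - n%:~R| < e.
Proof. by rewrite dTE => /(inf_lt (DS_n0 x)) [_ [n _ <-]]; exists n. Qed.

Lemma dT_lbP x y : (forall n : int, y <= `|x - n%:~R|) -> y <= dT x.
Proof. by move=> H; rewrite dTE; apply: lb_le_inf; [exact: DS_n0|move=> _ [n _ <-]]. Qed.

Lemma dT_shift x (m : int) : dT (x + m%:~R) = dT x.
Proof.
apply/eqP; rewrite eq_le; apply/andP; split; apply: dT_lbP => n.
- apply: le_trans (dT_le _ (n + m)) _; rewrite rmorphD /=.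
  by rewrite (_ : x + m%:~R - _ = x - n%:~R) //; ring.
- apply: le_trans (dT_le _ (n - m)) _; rewrite rmorphB /=.
  by rewrite (_ : x - _ = x + m%:~R - n%:~R) //; ring.
Qed.

Lemma dT_int (m : int) : dT m%:~R = 0.
Proof. by apply/eqP; rewrite eq_le dT_ge0 andbT; apply: le_trans (dT_le _ m) _; rewrite subrr normr0. Qed.

Lemma dT_opp x : dT (- x) = dT x.
Proof.
apply/eqP; rewrite eq_le; apply/andP; split; apply: dT_lbP => n.
- apply: le_trans (dT_le _ (- n)) _; rewrite rmorphN /=.
  by rewrite (_ : - x - _ = - (x - n%:~R)) ?normrN //; ring.
- apply: le_trans (dT_le _ (- n)) _; rewrite rmorphN /=.
  by rewrite (_ : x - _ = - (- x - n%:~R)) ?normrN //; ring.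
Qed.

Lemma dT_add x y : dT (x + y) <= dT x + dT y.
Proof.
apply/ler_addgt0Pr => e e0.
have [n hn] : exists n : int, `|x - n%:~R| < dT x + e / 2.
  by apply: dT_lt; rewrite ltrDl divr_gt0.
have [m hm] : exists n : int, `|y - n%:~R| < dT y + e / 2.
  by apply: dT_lt; rewrite ltrDl divr_gt0.
apply: le_trans (dT_le _ (n + m)) _.
have -> : x + y - (n + m)%:~R = (x - n%:~R) + (y - m%:~R) by rewrite intrD; rewrite opprD addrACA.
apply: le_trans (ler_normD _ _) _.
have : `|x - n%:~R| + `|y - m%:~R| < dT x + e / 2 + (dT y + e / 2) by exact: ltrD.
move=> /ltW /le_trans; apply; lra.
Qed.

Lemma dT_sub x y : dT (x - y) <= dT x + dT y.
Proof. by apply: le_trans (dT_add _ _) _; rewrite dT_opp. Qed.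

Lemma dT_le_half x : dT x <= 2^-1.
Proof.
apply: le_trans (dT_le _ (Num.floor (x + 2^-1))) _.
have := floor_itv (x + 2^-1); rewrite rmorphD /= => /andP [h1 h2].
rewrite ler_norml; apply/andP; split; lra.
Qed.

Lemma dT_half : dT 2^-1 = 2^-1 :> R.
Proof.
apply/eqP; rewrite eq_le dT_le_half /=; apply: dT_lbP => n.
have [n0|n0] := lerP n 0.
  have : n%:~R <= 0 :> R by rewrite lerz0.
  move=> h; rewrite ger0_norm; lra.
have : 1 <= n%:~R :> R by rewrite ler1z.
move=> h; rewrite ler0_norm; lra.
Qed.

Lemma dT_triangle x y z : dT (x - z) <= dT (x - y) + dT (y - z).
Proof. by have := dT_add (x - y) (y - z); rewrite addrA subrK. Qed.

Lemma dT_sym x y : dT (x - y) = dT (y - x).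
Proof. by rewrite -dT_opp opprB. Qed.

End DT.

Section Isom.
Variable R : realType.
Implicit Types g h : isomT R.

Definition sg (b : bool) : R := if b then -1 else 1.

Lemma sgM b c : sg b * sg c = sg (b (+) c).
Proof. by case: b; case: c; rewrite /sg /= ?mulr1 ?mul1r ?mulrNN ?mulr1. Qed.

Lemma sg2 b : sg b * sg b = 1.
Proof. by rewrite sgM addbb. Qed.

Lemma norm_sg b : `|sg b| = 1.
Proof. by case: b; rewrite /sg ?normrN normr1. Qed.

Lemma isom_appE g s : isom_app g s = rot g + sg (refl g) * s.
Proof. by rewrite /isom_app /sg; case: (refl g); rewrite ?mulN1r ?mul1r. Qed.

Definition icomp g h := IsomT (rot g + sg (refl g) * rot h) (refl g (+) refl h).
Definition iinvT g := IsomT (- (sg (refl g) * rot g)) (refl g).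
Definition irot (a : R) := IsomT a false.

Lemma icompE g h s : isom_app (icomp g h) s = isom_app g (isom_app h s).
Proof. rewrite !isom_appE /= -sgM; ring. Qed.

Lemma icompA g h k : icomp g (icomp h k) = icomp (icomp g h) k.
Proof. rewrite /icomp /= addbA -sgM; congr IsomT; ring. Qed.

Lemma icompV g : icomp (iinvT g) g = irot 0.
Proof. by rewrite /icomp /irot /= addbb addNr. Qed.

Lemma icompVr g : icomp g (iinvT g) = irot 0.
Proof. by rewrite /icomp /irot /= addbb mulrN mulrA sg2 mul1r subrr. Qed.

Lemma icomp0 g : icomp (irot 0) g = g.
Proof. by case: g => a b; rewrite /icomp /irot /sg /=; congr IsomT; ring. Qed.

Lemma icomp0r g : icomp g (irot 0) = g.
Proof. by case: g => a b; rewrite /icomp /irot /sg /= addbF; congr IsomT; ring. Qed.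

Lemma isom_dist_eq g h : refl g = refl h -> isom_dist g h = dT (rot g - rot h).
Proof.
move=> e; rewrite /isom_dist.
suff -> : [set distT (isom_app g s) (isom_app h s) | s in [set: R]] = [set dT (rot g - rot h)].
  by rewrite sup1.
apply/seteqP; split => [_ [s _ <-]|_ ->].
  by rewrite /= distTE !isom_appE e; congr dT; ring.
by exists 0 => //; rewrite distTE !isom_appE e; congr dT; ring.
Qed.

Lemma isom_dist_neq g h : refl g != refl h -> 2^-1 <= isom_dist g h.
Proof.
move=> e; rewrite /isom_dist.
set S := [set _ | _ in _].
have ubS : has_ubound S by exists 2^-1 => _ [s _ <-]; rewrite distTE dT_le_half.
pose s := (2^-1 - (rot g - rot h)) / (sg (refl g) - sg (refl h)).
have hs : distT (isom_app g s) (isom_app h s) = 2^-1.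
  rewrite distTE !isom_appE -(dT_half R); congr dT.
  have hd : sg (refl g) - sg (refl h) != 0.
    by move: e; rewrite /sg; case: (refl g); case: (refl h) => //= _; lra.
  rewrite /s; field.
  exact: hd.
by rewrite -hs; apply: ub_le_sup => //; exists s.
Qed.

Lemma isom_dist_lt g h e : isom_dist g h < e -> e <= 2^-1 ->
  refl g = refl h /\ dT (rot g - rot h) < e.
Proof.
move=> he e2; have rf : refl g = refl h.
  apply/eqP; apply: contraTT he => /isom_dist_neq h2; rewrite -leNgt.
  exact: le_trans e2 h2.
by split => //; rewrite -isom_dist_eq.
Qed.

End Isom.
Arguments sg {R} b.

End P1.

Module P2.
Import P1.
Set Implicit Arguments. Unset Strict Implicit. Unset Printing Implicit Defensive.
Import Order.TTheory GRing.Theory Num.Theory.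
Import numFieldNormedType.Exports.
Local Open Scope classical_set_scope.
Local Open Scope ring_scope.
Local Notation rot := Defs.rot.


Section Icont.
Variable R : realType.
Variable X : topologicalType.
Implicit Types f g : X -> isomT R.

Definition icont_at f x := forall e : R, 0 < e ->
  \forall y \near x, refl (f y) = refl (f x) /\ dT (rot (f y) - rot (f x)) < e.

Lemma icontP f : isom_continuous f <-> forall x, icont_at f x.
Proof.
split.
- move=> fc x e e0.
  have e1 : 0 < Num.min e 2^-1 by rewrite lt_min e0 /=; lra.
  apply: filterS (fc x _ e1) => y hy.
  have [|-> h2] := isom_dist_lt hy; first by rewrite ge_min lexx orbT.
  by split => //; apply: lt_le_trans h2 _; rewrite ge_min lexx.
- move=> fc x e e0; apply: filterS (fc x e e0) => y [h1 h2].
  by rewrite isom_dist_eq.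
Qed.

Lemma dT_sgM b (z : R) : dT (sg b * z) = dT z.
Proof. by case: b; rewrite /sg ?mulN1r ?mul1r ?dT_opp. Qed.

Lemma icont_at_comp f g x : icont_at f x -> icont_at g x ->
  icont_at (fun y => icomp (f y) (g y)) x.
Proof.
move=> fc gc e e0; have e2 : 0 < e / 2 by rewrite divr_gt0.
near=> y.
have [f1 f2] : refl (f y) = refl (f x) /\ dT (rot (f y) - rot (f x)) < e / 2 by near: y; exact: fc.
have [g1 g2] : refl (g y) = refl (g x) /\ dT (rot (g y) - rot (g x)) < e / 2 by near: y; exact: gc.
rewrite /icomp /= f1 g1; split => //.
rewrite (_ : _ - _ = (rot (f y) - rot (f x)) + sg (refl (f x)) * (rot (g y) - rot (g x))); last by ring.
apply: le_lt_trans (dT_add _ _) _; rewrite dT_sgM; lra.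
Unshelve. all: end_near.
Qed.

Lemma icont_at_inv f x : icont_at f x -> icont_at (fun y => iinvT (f y)) x.
Proof.
move=> fc e e0; apply: filterS (fc e e0) => y [f1 f2].
rewrite /iinvT /= f1; split => //.
by rewrite (_ : _ - _ = - (sg (refl (f x)) * (rot (f y) - rot (f x)))) ?dT_opp ?dT_sgM //; ring.
Qed.

Lemma icont_at_loc f x : (\forall y \near x, f y = f x) -> icont_at f x.
Proof.
move=> fc e e0; apply: filterS fc => y ->; split => //.
by rewrite subrr /dT distTE subr0 (dT_int R 0) .
Qed.

Lemma icont_at_near f g x : (\forall y \near x, f y = g y) -> icont_at g x -> icont_at f x.
Proof.
move=> fg gc e e0; have fx : f x = g x by exact: (nbhs_singleton fg).
near=> y.
have -> : f y = g y by near: y.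
rewrite fx; near: y; exact: gc.
Unshelve. all: end_near.
Qed.

End Icont.

Lemma icont_at_pre (R : realType) (X Y : topologicalType) (f : Y -> isomT R) (h : X -> Y) x :
  {for x, continuous h} -> icont_at f (h x) -> icont_at (f \o h) x.
Proof. by move=> hc fc e e0; exact: (hc _ (fc e e0)). Qed.

End P2.

Module P3.
Import P1 P2.
Set Implicit Arguments. Unset Strict Implicit. Unset Printing Implicit Defensive.
Import Order.TTheory GRing.Theory Num.Theory.
Import numFieldNormedType.Exports.
Local Open Scope classical_set_scope.
Local Open Scope ring_scope.
Local Notation rot := Defs.rot.


Definition pty (R : realType) (X : pseudoMetricType R) (x0 : X) : Type := X.
HB.instance Definition _ (R : realType) (X : pseudoMetricType R) (x0 : X) :=
  PseudoMetric.copy (pty x0) X.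
HB.instance Definition _ (R : realType) (X : pseudoMetricType R) (x0 : X) :=
  isPointed.Build (pty x0) x0.

Lemma compact_cover' (R : realType) (X : pseudoMetricType R) (A : set X) :
  compact A -> cover_compact A.
Proof.
move=> cA; have [[x0 _]|nX] := pselect (exists x : X, True).
  by move: cA; rewrite (@compact_cover (pty x0)).
move=> I D f _ _; exists fset0 => // x; exfalso; apply: nX; by exists x.
Qed.

Section Approx.
Variable R : realType.
Variable X : pseudoMetricType R.

Lemma clopen_nbhs (x : X) (U : set X) : compact [set: X] -> hausdorff_space X ->
  zero_dimensional X -> nbhs x U -> exists D, [/\ clopen D, D x & D `<=` U].
Proof.
move=> cX hX zX /(zero_dimensional_cvg hX zX cX) [D [Dx cD] DU].
by exists D.
Qed.

Lemma find_loc (D : X -> set X) (s : seq X) : (forall c, clopen (D c)) ->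
  forall y, \forall z \near y, find (fun c => `[< D c z >]) s = find (fun c => `[< D c y >]) s.
Proof.
move=> cD y; elim: s => [|c s IH] /=; first exact: nearW.
have [Dy|nDy] := pselect (D c y).
  have : \forall z \near y, D c z by have [oD _] := cD c; apply: open_nbhs_nbhs; split.
  apply: filterS => z Dz; by rewrite !asboolT.
have : \forall z \near y, ~ D c z.
  have [_ clD] := cD c; apply: open_nbhs_nbhs; split => //; exact: closed_openC.
move=> H; near=> z.
have -> : find (fun c0 => `[< D c0 z >]) s = find (fun c0 => `[< D c0 y >]) s by near: z.
have nDz : ~ D c z by near: z.
by rewrite !asboolF.
Unshelve. all: end_near.
Qed.

Definition red (z : R) := z - (Num.floor (z + 2^-1))%:~R.

Lemma red_le z : `|red z| <= 2^-1.
Proof.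
rewrite /red; have := floor_itv (z + 2^-1); rewrite rmorphD /= => /andP [h1 h2].
rewrite ler_norml; apply/andP; split; lra.
Qed.

Lemma dT_red z : dT (z - red z) = 0.
Proof. by rewrite /red opprB addrCA subrr addr0 dT_int. Qed.

Lemma approx (th : X -> R) (d : R) : compact [set: X] -> hausdorff_space X ->
  zero_dimensional X -> 0 < d ->
  (forall x e, 0 < e -> \forall y \near x, dT (th y - th x) < e) ->
  exists th' : X -> R, [/\ forall x, \forall y \near x, th' y = th' x,
     forall x, dT (th x - th' x) < d & forall x, `|th' x| <= 2^-1].
Proof.
move=> cX hX zX d0 thc.
have : forall x, exists D, [/\ clopen D, D x & D `<=` [set y | dT (th y - th x) < d]].
  by move=> x; apply: clopen_nbhs => //; exact: thc.
move=> /choice [D HD].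
have cD c : clopen (D c) by case: (HD c).
have cc : cover_compact [set: X] by exact: compact_cover'.
case: (cc X [set: X] D).
- by move=> i _; have [[]] := HD i.
- by move=> x _; exists x => //; have [] := HD x.
move=> D' _ cov.
pose s : seq X := D'.
pose idx y := find (fun c => `[< D c y >]) s.
have idx_lt y : (idx y < size s)%N.
  rewrite -has_find; have [c /= cD' Dcy] := cov y I.
  by apply/hasP; exists c => //; rewrite asboolT.
have idx_D y : D (nth y s (idx y)) y.
  by apply/asboolP; apply: (@nth_find _ y (fun c => `[< D c y >])); rewrite has_find idx_lt.
exists (fun y => red (th (nth y s (idx y)))); split.
- move=> x; apply: filterS (find_loc s cD x) => y e.
  rewrite /idx e; congr (red (th _)); apply: set_nth_default; exact: idx_lt.
- move=> x; set c := nth x s (idx x).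
  rewrite (_ : _ - _ = (th x - th c) + (th c - red (th c))); last by ring.
  apply: le_lt_trans (dT_add _ _) _; rewrite dT_red addr0.
  by have [_ _ /(_ x (idx_D x))] := HD c.
- by move=> x; exact: red_le.
Qed.

End Approx.

End P3.

Module P4.
Import P1 P2 P3.
Set Implicit Arguments. Unset Strict Implicit. Unset Printing Implicit Defensive.
Import Order.TTheory GRing.Theory Num.Theory.
Import numFieldNormedType.Exports.
Local Open Scope classical_set_scope.
Local Open Scope ring_scope.
Local Notation rot := Defs.rot.


Section SetType.
Variable R : realType.
Variable X : pseudoMetricType R.
Variable A : set X.

Lemma st_openP (U : set (set_type A)) : open U <-> exists2 V : set X, open V & set_val @^-1` V = U.
Proof. by split => [[V oV <-]|[V oV <-]]; [exists V|exists V]. Qed.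

Lemma st_nbhsP (a : set_type A) (U : set (set_type A)) :
  nbhs a U -> exists2 V : set X, open V /\ V (set_val a) & set_val @^-1` V `<=` U.
Proof.
rewrite nbhsE => -[W [oW Wa] WU]; have [V oV VW] := (st_openP W).1 oW.
by exists V; [split => //; rewrite -VW in Wa|rewrite VW].
Qed.

Lemma st_val_cont : continuous (set_val : set_type A -> X).
Proof. exact: initial_continuous. Qed.

Lemma st_hausdorff : hausdorff_space X -> hausdorff_space (set_type A).
Proof.
rewrite !open_hausdorff => hX a b ab.
have : set_val a != set_val b by apply: contra ab => /eqP /val_inj ->.
move=> /hX [[U V] /= [aU bV] [oU oV /eqP UV]].
exists (set_val @^-1` U, set_val @^-1` V) => /=.
  by move: aU bV => /set_mem aU /set_mem bV; split; apply/mem_set.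
split; [by exists U|by exists V|].
by apply/eqP; rewrite -subset0 => z [Uz Vz]; have : (U `&` V) (set_val z) by []; rewrite UV.
Qed.

Lemma st_zero_dim : zero_dimensional X -> zero_dimensional (set_type A).
Proof.
move=> zX a b ab.
have : set_val a != set_val b by apply: contra ab => /eqP /val_inj ->.
move=> /zX [U [[oU cU] Ua Ub]]; exists (set_val @^-1` U); split => //.
split; first by exists U.
by apply: preimage_closed => // z _; exact: st_val_cont.
Qed.

Lemma st_perfect : open A -> perfect_set [set: X] -> perfect_set [set: set_type A].
Proof.
move=> oA /perfectTP pX; apply/perfectTP => a /st_openP [V oV Va].
apply: (pX (set_val a)).
have -> : [set set_val a] = V `&` A.
  apply/seteqP; split => [y ->|y [Vy Ay]].
    split; last by case: a {Va} => /= x xA; exact: set_mem.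
    by have : (set_val @^-1` V) a by rewrite Va.
  have Ay' : y \in A by apply/mem_set.
  have : (set_val @^-1` V) (exist _ y Ay') by [].
  by rewrite Va => <-.
exact: openI.
Qed.

Lemma st_compact : closed A -> compact [set: X] -> compact [set: set_type A].
Proof.
move=> cA cX F PF _.
pose G := set_val @ F.
have PG : ProperFilter G by exact: fmap_proper_filter.
have [p [_ clp]] := cX G PG filterT.
have GA : G A.
  by rewrite /G /= nbhs_simpl; apply: filterS filterT => -[y /= yA] _; exact: set_mem.
have Ap : A p.
  move: clp; rewrite clusterE => /(_ A GA); by rewrite -(closure_id A).1.
exists (exist _ p (mem_set Ap)); split => //.
move=> B U FB /st_nbhsP [V [oV Vp] VU].
have GB : G (set_val @` B).
  by rewrite /G /= nbhs_simpl; apply: filterS FB => b Bb; exists b.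
have nV : nbhs p V by apply: open_nbhs_nbhs; split.
have [_ [[b Bb <-] Vb]] := clp _ _ GB nV.
by exists b; split => //; exact: VU.
Qed.

End SetType.

Definition sty (R : realType) (X : pseudoMetricType R) (A : set X) (a : set_type A) : Type := set_type A.
HB.instance Definition _ (R : realType) (X : pseudoMetricType R) (A : set X) (a : set_type A) :=
  PseudoMetric.copy (sty a) (set_type A).
HB.instance Definition _ (R : realType) (X : pseudoMetricType R) (A : set X) (a : set_type A) :=
  isPointed.Build (sty a) a.

Section Homeo.
Variable R : realType.
Variable X : pseudoMetricType R.

Lemma st_cantor_like (A : set X) (a : set_type A) : cantor_like X -> clopen A ->
  cantor_like (sty a).
Proof.
move=> [pX cX hX zX] [oA clA]; split.
- exact: st_perfect.
- exact: st_compact.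
- exact: st_hausdorff.
- exact: st_zero_dim.
Qed.

Lemma cantor_homeo (A : set X) (a : set_type A) : cantor_like X -> clopen A ->
  exists e : cantor_space -> set_type A, exists ei : set_type A -> cantor_space,
  [/\ cancel e ei, cancel ei e, continuous e & continuous ei].
Proof.
move=> cl clA.
have [f [cf clf]] := @homeomorphism_cantor_like R (sty a) (st_cantor_like a cl clA).
exists f, f^-1%FUN; split.
- by move=> x; apply: funK; exact: in_setT.
- by move=> x; apply: invK; exact: in_setT.
- exact: cf.
- apply/continuous_closedP => K cK.
  have -> : f^-1%FUN @^-1` K = f @` K.
    apply/seteqP; split => [y Ky|_ [k Kk <-]].
      by exists (f^-1%FUN y) => //; apply: invK; exact: in_setT.
    by rewrite /= funK //; exact: in_setT.
  exact: clf.
Qed.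

End Homeo.

Lemma insubd_cont (R : realType) (X : pseudoMetricType R) (A : set X) (a0 : set_type A) x :
  open A -> A x -> {for x, continuous (insubd a0 : X -> set_type A)}.
Proof.
move=> oA Ax U /st_nbhsP [V [oV Vx] VU].
have AVx : nbhs x (A `&` V).
  apply: open_nbhs_nbhs; split; first exact: openI.
  by split => //; move: Vx; rewrite set_valE /= insubdK //; exact/mem_set.
apply: filterS AVx => y [Ay Vy]; apply: VU => /=.
by rewrite set_valE /= insubdK //; exact/mem_set.
Qed.

Lemma piece_homeo (R : realType) (X Y : pseudoMetricType R) (A : set X) (B : set Y) :
  cantor_like X -> cantor_like Y -> clopen A -> clopen B -> A !=set0 -> B !=set0 ->
  exists f : X -> Y, exists g : Y -> X,
  [/\ forall x, A x -> B (f x), forall y, B y -> A (g y),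
      forall x, A x -> g (f x) = x, forall y, B y -> f (g y) = y &
      (forall x, A x -> {for x, continuous f}) /\ forall y, B y -> {for y, continuous g}].
Proof.
move=> cX cY clA clB [x0 Ax0] [y0 By0].
pose a0 : set_type A := exist _ x0 (mem_set Ax0).
pose b0 : set_type B := exist _ y0 (mem_set By0).
have [eA [eiA [eAK eiAK ceA ceiA]]] := cantor_homeo a0 cX clA.
have [eB [eiB [eBK eiBK ceB ceiB]]] := cantor_homeo b0 cY clB.
exists (set_val \o eB \o eiA \o insubd a0), (set_val \o eA \o eiB \o insubd b0).
split.
- by move=> x _ /=; exact: set_mem (valP _).
- by move=> y _ /=; exact: set_mem (valP _).
- by move=> x Ax /=; rewrite set_valE /= valKd eBK eiAK insubdK //; exact/mem_set.
- by move=> y By /=; rewrite set_valE /= valKd eAK eiBK insubdK //; exact/mem_set.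
split.
- move=> x Ax; apply: continuous_comp; first by apply: insubd_cont => //; case: clA.
  apply: continuous_comp; first exact: ceiA.
  apply: continuous_comp; first exact: ceB.
  exact: st_val_cont.
- move=> y By; apply: continuous_comp; first by apply: insubd_cont => //; case: clB.
  apply: continuous_comp; first exact: ceiB.
  apply: continuous_comp; first exact: ceA.
  exact: st_val_cont.
Qed.

End P4.

Module P5.
Import P1 P2 P3 P4.
Set Implicit Arguments. Unset Strict Implicit. Unset Printing Implicit Defensive.
Import Order.TTheory GRing.Theory Num.Theory.
Import numFieldNormedType.Exports.
Local Open Scope classical_set_scope.
Local Open Scope ring_scope.
Local Notation rot := Defs.rot.


Section Towers.
Variable R : realType.
Variables (X : pseudoMetricType R) (alpha : X -> X).
Variables (V : finType) (hV : V -> nat) (P : V -> nat -> set X).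
Hypothesis KRP : KR_partition alpha hV P.
Hypothesis alpha_inj : injective alpha.

Lemma KR_pos v : (0 < hV v)%N. Proof. by case: KRP. Qed.
Lemma KR_cl v k : (1 <= k <= hV v)%N -> [/\ open (P v k), closed (P v k) & P v k !=set0].
Proof. by case: KRP => _ H _ _ _; exact: H. Qed.
Lemma KR_disj v k v' k' : (1 <= k <= hV v)%N -> (1 <= k' <= hV v')%N ->
  P v k `&` P v' k' !=set0 -> v = v' /\ k = k'.
Proof. by case: KRP => _ _ H _ _; exact: H. Qed.
Lemma KR_cov' x : exists p : V * nat, (1 <= p.2 <= hV p.1)%N /\ P p.1 p.2 x.
Proof. by case: KRP => _ _ _ H _; have [v [k h]] := H x; exists (v, k). Qed.
Lemma KR_step v k : (1 <= k < hV v)%N -> alpha @` P v k = P v k.+1.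
Proof. by case: KRP => _ _ _ _ H; exact: H. Qed.

Definition pidx x : V * nat := projT1 (cid (KR_cov' x)).
Definition lv x := (pidx x).1.
Definition lk x := (pidx x).2.

Lemma pidx_spec x : (1 <= lk x <= hV (lv x))%N /\ P (lv x) (lk x) x.
Proof. exact: (projT2 (cid (KR_cov' x))). Qed.

Lemma lk_ge1 x : (1 <= lk x)%N. Proof. by have [/andP[]] := pidx_spec x. Qed.
Lemma lk_le x : (lk x <= hV (lv x))%N. Proof. by have [/andP[]] := pidx_spec x. Qed.
Lemma lk_in x : P (lv x) (lk x) x. Proof. by have [] := pidx_spec x. Qed.

Lemma pidx_uniq v k x : (1 <= k <= hV v)%N -> P v k x -> v = lv x /\ k = lk x.
Proof.
move=> hk Px; apply: KR_disj => //; first exact: (pidx_spec x).1.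
by exists x; split => //; exact: lk_in.
Qed.

Lemma pidx_loc x : \forall y \near x, pidx y = pidx x.
Proof.
have [oP _ _] := KR_cl (pidx_spec x).1.
have : nbhs x (P (lv x) (lk x)) by apply: open_nbhs_nbhs; split => //; exact: lk_in.
apply: filterS => y Py; have [e1 e2] := pidx_uniq (pidx_spec x).1 Py.
by rewrite /lv /lk in e1 e2; case: (pidx y) e1 e2 => a b /= <- <-; case: (pidx x).
Qed.

Lemma lv_step x : (lk x < hV (lv x))%N -> lv (alpha x) = lv x /\ lk (alpha x) = (lk x).+1.
Proof.
move=> hlt; have h1 : (1 <= lk x < hV (lv x))%N by rewrite lk_ge1.
have Ph : P (lv x) (lk x).+1 (alpha x) by rewrite -KR_step //; exists x => //; exact: lk_in.
have hk : (1 <= (lk x).+1 <= hV (lv x))%N by rewrite hlt.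
by have [<- <-] := pidx_uniq hk Ph.
Qed.

Lemma lk_top x : lk x = hV (lv x) -> lk (alpha x) = 1%N.
Proof.
move=> htop; apply/eqP; rewrite eqn_leq lk_ge1 andbT; apply: contraT; rewrite -ltnNge => h1.
set k := lk (alpha x); set v := lv (alpha x).
have hk : (1 <= k.-1 < hV v)%N.
  by rewrite -ltnS prednK ?(ltnW h1) // h1 /= (leq_trans _ (lk_le _)) // ltnS leq_pred.
have : P v k.-1.+1 (alpha x) by rewrite prednK ?(ltnW h1) //; exact: lk_in.
rewrite -KR_step // => -[y Py /alpha_inj yx]; subst y.
have hk' : (1 <= k.-1 <= hV v)%N by case/andP: hk => -> /ltnW ->.
have [e1 e2] := pidx_uniq hk' Py.
by have := lk_le (alpha x); rewrite -/k -/v e1 -htop -e2; lia.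
Qed.

Variable ainv : X -> X.
Hypothesis alphaK : cancel alpha ainv.
Hypothesis ainvK : cancel ainv alpha.

Lemma back x : (1 < lk x)%N -> lv (ainv x) = lv x /\ lk (ainv x) = (lk x).-1.
Proof.
move=> h1; set k := lk x; set v := lv x.
have hk : (1 <= k.-1 < hV v)%N by rewrite /k /v; have := lk_le x; lia.
have : P v k.-1.+1 x by rewrite prednK ?(ltnW h1) //; exact: lk_in.
rewrite -KR_step // => -[y Py yx].
have -> : ainv x = y by rewrite -yx alphaK.
have hk' : (1 <= k.-1 <= hV v)%N by case/andP: hk => -> /ltnW ->.
by have [<- <-] := pidx_uniq hk' Py.
Qed.

Lemma back_iter n x : (n < lk x)%N -> lv (iter n ainv x) = lv x /\ lk (iter n ainv x) = (lk x - n)%N.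
Proof.
elim: n => [|n IH] hn /=; first by rewrite subn0.
have [e1 e2] := IH (ltnW hn).
have h1 : (1 < lk (iter n ainv x))%N by rewrite e2; lia.
have [e3 e4] := back h1; rewrite e3 e4 e1 e2; split => //; lia.
Qed.

Lemma iter_cancel n x : iter n alpha (iter n ainv x) = x.
Proof. by elim: n x => [|n IH] x //; rewrite iterSr /= ainvK IH. Qed.

Definition base x := iter (lk x).-1 ainv x.

Lemma base_spec x : [/\ lk (base x) = 1%N, lv (base x) = lv x & iter (lk x).-1 alpha (base x) = x].
Proof.
have h : ((lk x).-1 < lk x)%N by have := lk_ge1 x; lia.
have [e1 e2] := back_iter h; split => //; first by rewrite /base e2; have := lk_ge1 x; lia.
exact: iter_cancel.
Qed.

Lemma fwd b i : lk b = 1%N -> (i < hV (lv b))%N ->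
  lv (iter i alpha b) = lv b /\ lk (iter i alpha b) = i.+1.
Proof.
move=> b1; elim: i => [|i IH] hi /=; first by [].
have [e1 e2] := IH (ltnW hi).
have h : (lk (iter i alpha b) < hV (lv (iter i alpha b)))%N by rewrite e1 e2.
by have [-> ->] := lv_step h; rewrite e1 e2.
Qed.

Lemma iter_in v x i : P v 1 x -> (i < hV v)%N -> P v i.+1 (iter i alpha x).
Proof.
move=> Px hi; have h1 : (1 <= 1 <= hV v)%N by rewrite KR_pos.
have [ev ek] := pidx_uniq h1 Px.
have hi' : (i < hV (lv x))%N by rewrite -ev.
have [e1 e2] := fwd (esym ek) hi'.
by rewrite ev -e1 -e2; exact: lk_in.
Qed.

End Towers.

Section PiTowers.
Variable R : realType.
Variables (X : pseudoMetricType R) (alpha : X -> X).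
Variables (V : finType) (hV : V -> nat) (P : V -> nat -> set X).
Variables (W : finType) (hW : W -> nat).
Variables (piV : W -> nat -> V) (piK : W -> nat -> nat).
Hypothesis KRP : KR_partition alpha hV P.
Hypothesis alpha_inj : injective alpha.
Hypothesis piR : forall w l, (1 <= l <= hW w)%N -> (1 <= piK w l <= hV (piV w l))%N.
Hypothesis piI : forall w l w' l', (1 <= l <= hW w)%N -> (1 <= l' <= hW w')%N ->
     piV w l = piV w' l' -> piK w l = piK w' l' -> w = w' /\ l = l'.
Hypothesis piS : forall v k, (1 <= k <= hV v)%N ->
     exists w l, [/\ (1 <= l <= hW w)%N, piV w l = v & piK w l = k].
Hypothesis pi1 : forall w l, (1 <= l <= (hW w).-1)%N ->
     P (piV w l.+1) (piK w l.+1) = alpha @` P (piV w l) (piK w l).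

Local Notation lv := (lv KRP).
Local Notation lk := (lk KRP).

Lemma midx' x : exists p : W * nat, [/\ (1 <= p.2 <= hW p.1)%N, piV p.1 p.2 = lv x & piK p.1 p.2 = lk x].
Proof. by have [w [l h]] := piS (pidx_spec KRP x).1; exists (w, l). Qed.

Definition midx x := projT1 (cid (midx' x)).
Definition mw x := (midx x).1.
Definition ml x := (midx x).2.

Lemma midx_spec x : [/\ (1 <= ml x <= hW (mw x))%N, piV (mw x) (ml x) = lv x & piK (mw x) (ml x) = lk x].
Proof. exact: (projT2 (cid (midx' x))). Qed.

Lemma ml_ge1 x : (1 <= ml x)%N. Proof. by have [/andP[]] := midx_spec x. Qed.
Lemma ml_le x : (ml x <= hW (mw x))%N. Proof. by have [/andP[]] := midx_spec x. Qed.

Lemma midx_uniq w l x : (1 <= l <= hW w)%N -> piV w l = lv x -> piK w l = lk x ->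
  w = mw x /\ l = ml x.
Proof.
move=> hl e1 e2; have [h1 e3 e4] := midx_spec x.
by apply: piI => //; rewrite ?e1 ?e2 ?e3 ?e4.
Qed.

Lemma midx_in x : P (piV (mw x) (ml x)) (piK (mw x) (ml x)) x.
Proof. by have [_ -> ->] := midx_spec x; exact: lk_in. Qed.

Lemma midx_of w l x : (1 <= l <= hW w)%N -> P (piV w l) (piK w l) x -> w = mw x /\ l = ml x.
Proof.
move=> hl Px; have [e1 e2] := pidx_uniq KRP (piR hl) Px.
exact: midx_uniq.
Qed.

Lemma midx_loc x : \forall y \near x, midx y = midx x.
Proof.
apply: filterS (pidx_loc KRP x) => y e.
have [h1 e1 e2] := midx_spec x.
have ev : lv y = lv x by exact: (congr1 fst e).
have ek : lk y = lk x by exact: (congr1 snd e).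
have [e3 e4] := @midx_uniq (mw x) (ml x) y h1 (etrans e1 (esym ev)) (etrans e2 (esym ek)).
by move: e3 e4; rewrite /mw /ml; case: (midx y) => a b; case: (midx x) => c d /= -> ->.
Qed.

Lemma ml_step x : (ml x < hW (mw x))%N -> mw (alpha x) = mw x /\ ml (alpha x) = (ml x).+1.
Proof.
move=> hlt; set w := mw x; set l := ml x.
have hl : (1 <= l <= (hW w).-1)%N by have := ml_ge1 x; move: hlt; rewrite -/w -/l; lia.
have Px : P (piV w (l.+1)) (piK w (l.+1)) (alpha x) by rewrite pi1 //; exists x => //; exact: midx_in.
have hl1 : (1 <= l.+1 <= hW w)%N by rewrite hlt.
by have [<- <-] := midx_of hl1 Px.
Qed.

Lemma ml_top x : ml x = hW (mw x) -> ml (alpha x) = 1%N.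
Proof.
move=> htop; apply/eqP; rewrite eqn_leq ml_ge1 andbT; apply: contraT; rewrite -ltnNge => h1.
set w := mw (alpha x); set l := ml (alpha x).
have hl : (1 <= l.-1 <= (hW w).-1)%N by have := ml_le (alpha x); rewrite -/w -/l; lia.
have : P (piV w l.-1.+1) (piK w l.-1.+1) (alpha x) by rewrite prednK ?(ltnW h1) //; exact: midx_in.
rewrite pi1 // => -[y Py /alpha_inj yx]; subst y.
have hl' : (1 <= l.-1 <= hW w)%N by have := ml_le (alpha x); rewrite -/w -/l; lia.
have [e1 e2] := midx_of hl' Py.
by have := ml_le (alpha x); rewrite -/w -/l e1 -htop -e2; lia.
Qed.

End PiTowers.


End P5.

Module P6.
Import P1 P2 P3 P4 P5.
Set Implicit Arguments. Unset Strict Implicit. Unset Printing Implicit Defensive.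
Import Order.TTheory GRing.Theory Num.Theory.
Import numFieldNormedType.Exports.
Local Open Scope classical_set_scope.
Local Open Scope ring_scope.
Local Notation rot := Defs.rot.


Lemma cont_near (S T : topologicalType) (F G : S -> T) x :
  (\forall y \near x, F y = G y) -> {for x, continuous G} -> {for x, continuous F}.
Proof.
move=> FG Gc U; have Fx : F x = G x by exact: (nbhs_singleton FG).
rewrite Fx => /Gc hU; rewrite nbhs_simpl /=; near=> y.
have e : F y = G y by near: y.
have hG : U (G y) by near: y.
by rewrite /preimage /= e.
Unshelve. all: end_near.
Qed.

Section Main.
Variable R : realType.
Variables (X : pseudoMetricType R) (alpha : X -> X).
Variables (Y : pseudoMetricType R) (beta : Y -> Y).
Variables (phi : X -> isomT R) (psi : Y -> isomT R).
Variables (V : finType) (hV : V -> nat) (P : V -> nat -> set X).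
Variables (W : finType) (hW : W -> nat) (Q : W -> nat -> set Y).
Variables (piV : W -> nat -> V) (piK : W -> nat -> nat).
Hypothesis cmsX : cantor_minimal_system alpha.
Hypothesis cmsY : cantor_minimal_system beta.
Hypothesis cphi : isom_continuous phi.
Hypothesis cpsi : isom_continuous psi.
Hypothesis KRP : KR_partition alpha hV P.
Hypothesis KRQ : KR_partition beta hW Q.
Hypothesis ocP : orient_constant phi hV P.
Hypothesis ocQ : orient_constant psi hW Q.
Hypothesis piR : forall w l, (1 <= l <= hW w)%N -> (1 <= piK w l <= hV (piV w l))%N.
Hypothesis piI : forall w l w' l', (1 <= l <= hW w)%N -> (1 <= l' <= hW w')%N ->
     piV w l = piV w' l' -> piK w l = piK w' l' -> w = w' /\ l = l'.
Hypothesis piS : forall v k, (1 <= k <= hV v)%N ->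
     exists w l, [/\ (1 <= l <= hW w)%N, piV w l = v & piK w l = k].
Hypothesis pi1 : forall w l, (1 <= l <= (hW w).-1)%N ->
     P (piV w l.+1) (piK w l.+1) = alpha @` P (piV w l) (piK w l).
Hypothesis pi2 : forall v x (y : W -> Y), P v 1%N x -> (forall w, Q w 1%N (y w)) ->
     orient_tower phi alpha (hV v) x =
     \big[addb/false]_(w : W | piV w 1%N == v) orient_tower psi beta (hW w) (y w).

Lemma homA : homeomorphism alpha. Proof. by case: cmsX => _ []. Qed.
Definition ainv := projT1 (cid homA).
Lemma ainv_spec : [/\ cancel alpha ainv, cancel ainv alpha, continuous alpha & continuous ainv].
Proof. exact: (projT2 (cid homA)). Qed.
Lemma alphaK : cancel alpha ainv. Proof. by case: ainv_spec. Qed.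
Lemma ainvK : cancel ainv alpha. Proof. by case: ainv_spec. Qed.
Lemma alpha_cont : continuous alpha. Proof. by case: ainv_spec. Qed.
Lemma ainv_cont : continuous ainv. Proof. by case: ainv_spec. Qed.
Lemma alpha_inj : injective alpha. Proof. exact: can_inj alphaK. Qed.

Lemma X_cl : cantor_like X. Proof. by case: cmsX => [[]]. Qed.
Lemma Y_cl : cantor_like Y. Proof. by case: cmsY => [[]]. Qed.
Lemma X_n0 : [set: X] !=set0. Proof. by case: cmsX => [[]]. Qed.
Lemma Y_n0 : [set: Y] !=set0. Proof. by case: cmsY => [[]]. Qed.

Local Notation lv := (lv KRP).
Local Notation lk := (lk KRP).
Local Notation midx := (midx KRP piS).
Local Notation mw := (mw KRP piS).
Local Notation ml := (ml KRP piS).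
Local Notation qidx := (pidx KRQ).
Local Notation lw := (P5.lv KRQ).
Local Notation ll := (P5.lk KRQ).

Definition oP v k := `[< exists x, P v k x /\ orient phi x >].
Definition oQ w l := `[< exists y, Q w l y /\ orient psi y >].
Definition OP v := \big[addb/false]_(i < hV v) oP v i.+1.
Definition OQ w := \big[addb/false]_(i < hW w) oQ w i.+1.

Lemma oP_eq v k x : (1 <= k <= hV v)%N -> P v k x -> oP v k = orient phi x.
Proof.
move=> hk Px; rewrite /oP; case ox: (orient phi x).
  by apply/asboolP; exists x.
apply/asboolP => -[y [Py oy]]; move: ox; by rewrite (ocP hk Px Py) oy.
Qed.

Lemma oQ_eq w l y : (1 <= l <= hW w)%N -> Q w l y -> oQ w l = orient psi y.
Proof.
move=> hk Py; rewrite /oQ; case oy: (orient psi y).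
  by apply/asboolP; exists y.
apply/asboolP => -[z [Pz oz]]; move: oy; by rewrite (ocQ hk Py Pz) oz.
Qed.

Lemma hyp2 v : OP v = \big[addb/false]_(w | piV w 1%N == v) OQ w.
Proof.
have hv1 : (1 <= 1 <= hV v)%N by rewrite (KR_pos KRP).
have [_ _ [x Px]] := KR_cl KRP hv1.
have : forall w, exists y, Q w 1%N y.
  move=> w; have hw : (1 <= 1 <= hW w)%N by rewrite (KR_pos KRQ).
  by have [_ _ [y Qy]] := KR_cl KRQ hw; exists y.
move=> /choice [y Qy].
have := pi2 Px Qy; rewrite /orient_tower => e.
rewrite /OP (eq_bigr (fun i : 'I_(hV v) => orient phi (iter i alpha x))); last first.
  by move=> i _; apply: oP_eq; [rewrite ltn_ord | exact: (P5.iter_in KRP)].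
rewrite e; apply: eq_bigr => w _; rewrite /OQ; apply: eq_bigr => i _.
by apply/esym/oQ_eq; [rewrite ltn_ord | exact: (P5.iter_in KRQ)].
Qed.


Lemma pair_eq (A B : Type) (p q : A * B) : p.1 = q.1 -> p.2 = q.2 -> p = q.
Proof. by case: p; case: q => ? ? ? ? /= -> ->. Qed.

Lemma midx_valid x : (1 <= (midx x).2 <= hW (midx x).1)%N.
Proof. by have [] := midx_spec KRP piS x. Qed.

Lemma qidx_valid y : (1 <= (qidx y).2 <= hW (qidx y).1)%N.
Proof. exact: (pidx_spec KRQ y).1. Qed.

Lemma sigma_ex : exists s : X -> Y, exists t : Y -> X,
  [/\ cancel s t, cancel t s, continuous s, continuous t &
    forall x y, Q (mw x) (ml x) (s x) /\ P (piV (lw y) (ll y)) (piK (lw y) (ll y)) (t y)].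
Proof.
have [x0 _] := X_n0; have [y0 _] := Y_n0.
have : forall p : W * nat, exists fg : (X -> Y) * (Y -> X), (1 <= p.2 <= hW p.1)%N ->
  let A := P (piV p.1 p.2) (piK p.1 p.2) in let B := Q p.1 p.2 in
  [/\ forall x, A x -> B (fg.1 x), forall y, B y -> A (fg.2 y),
      forall x, A x -> fg.2 (fg.1 x) = x, forall y, B y -> fg.1 (fg.2 y) = y &
      (forall x, A x -> {for x, continuous fg.1}) /\ forall y, B y -> {for y, continuous fg.2}].
  move=> [w l]; case: (boolP (1 <= l <= hW w)%N) => /= hl; last by exists (fun _ => y0, fun _ => x0).
  have [oA cA nA] := KR_cl KRP (piR hl).
  have [oB cB nB] := KR_cl KRQ hl.
  have [f [g H]] := piece_homeo X_cl Y_cl (conj oA cA) (conj oB cB) nA nB.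
  by exists (f, g).
move=> /choice [F HF].
exists (fun x => (F (midx x)).1 x), (fun y => (F (qidx y)).2 y).
have sQ x : Q (mw x) (ml x) ((F (midx x)).1 x).
  by have [h1 _ _ _ _] := HF _ (midx_valid x); apply: h1; exact: (midx_in KRP piS).
have tP y : P (piV (lw y) (ll y)) (piK (lw y) (ll y)) ((F (qidx y)).2 y).
  by have [_ h2 _ _ _] := HF _ (qidx_valid y); apply: h2; exact: (lk_in KRQ).
split => //.
- move=> x /=; have [e1 e2] := pidx_uniq KRQ (midx_valid x) (sQ x).
  have -> : qidx ((F (midx x)).1 x) = midx x by apply: pair_eq.
  by have [_ _ h3 _ _] := HF _ (midx_valid x); apply: h3; exact: (midx_in KRP piS).
- move=> y /=; have [e1 e2] := midx_of KRP piR piI piS (qidx_valid y) (tP y).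
  have -> : midx ((F (qidx y)).2 y) = qidx y by apply: pair_eq.
  by have [_ _ _ h4 _] := HF _ (qidx_valid y); apply: h4; exact: (lk_in KRQ).
- move=> x; apply: (@cont_near _ _ _ (F (midx x)).1).
    by apply: filterS (midx_loc KRP piI piS x) => y ->.
  by have [_ _ _ _ [h5 _]] := HF _ (midx_valid x); apply: h5; exact: (midx_in KRP piS).
- move=> y; apply: (@cont_near _ _ _ (F (qidx y)).2).
    by apply: filterS (pidx_loc KRQ y) => z ->.
  by have [_ _ _ _ [_ h6]] := HF _ (qidx_valid y); apply: h6; exact: (lk_in KRQ).
Qed.


Definition Rr x := \big[addb/false]_(ml x <= j < (hW (mw x)).+1) oQ (mw x) j.
Definition Bb x := \big[addb/false]_(1 <= j < lk x) oP (lv x) j.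
Definition Ss v k := \big[addb/false]_(w | (piV w 1 == v) && (piK w 1 <= k)%N) OQ w.
Definition St v k := \big[addb/false]_(w | (piV w 1 == v) && (piK w 1 == k)) OQ w.
Definition gg x := Rr x (+) Bb x (+) Ss (lv x) (lk x).

Lemma Ss_step v k : Ss v k.+1 = Ss v k (+) St v k.+1.
Proof.
rewrite /Ss (bigID (fun w => piK w 1 <= k)%N) /=; congr addb; apply: eq_bigl => w.
  by case: (piV w 1 == v) => //=; set a := piK w 1; lia.
by case: (piV w 1 == v) => //=; set a := piK w 1; lia.
Qed.

Lemma piK1 w : (1 <= piK w 1 <= hV (piV w 1))%N.
Proof. by apply: piR; rewrite (KR_pos KRQ). Qed.

Lemma Ss0 v : Ss v 0 = false.
Proof. by apply: big_pred0 => w; have := piK1 w; case: (piV w 1 == v) => //=; lia. Qed.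

Lemma St_one v k w' : piV w' 1 = v -> piK w' 1 = k -> St v k = OQ w'.
Proof.
move=> e1 e2; apply: big_pred1 => w /=.
apply/idP/idP => [/andP [/eqP h1 /eqP h2]|/eqP ->]; last by rewrite e1 e2 !eqxx.
have hw : (1 <= 1 <= hW w)%N by rewrite (KR_pos KRQ).
have hw' : (1 <= 1 <= hW w')%N by rewrite (KR_pos KRQ).
have [-> _] := piI hw hw' (etrans h1 (esym e1)) (etrans h2 (esym e2)).
by rewrite eqxx.
Qed.

Lemma St_none v k w l : (1 < l <= hW w)%N -> piV w l = v -> piK w l = k -> St v k = false.
Proof.
move=> hl e1 e2; apply: big_pred0 => w' /=.
apply/negbTE/negP => /andP [/eqP h1 /eqP h2].
have hw' : (1 <= 1 <= hW w')%N by rewrite (KR_pos KRQ).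
have hl' : (1 <= l <= hW w)%N by case/andP: hl => /ltnW -> ->.
have [_ h] := piI hw' hl' (etrans h1 (esym e1)) (etrans h2 (esym e2)).
by move: hl; rewrite -h.
Qed.

Lemma Ss_all v : Ss v (hV v) = OP v.
Proof.
rewrite hyp2 /Ss; apply: eq_bigl => w.
case e: (piV w 1 == v) => //=; move/eqP: e => e.
by have := piK1 w; rewrite e => /andP [_ ->].
Qed.

Lemma Ss1 v : Ss v 1 = St v 1.
Proof. by rewrite Ss_step Ss0. Qed.

Lemma Rr_top x : ml x = hW (mw x) -> Rr x = oQ (mw x) (ml x).
Proof. by move=> e; rewrite /Rr -e big_nat1. Qed.

Lemma Rr_start x : ml x = 1%N -> Rr x = OQ (mw x).
Proof. by move=> e; rewrite /Rr e big_add1 /= big_mkord. Qed.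

Lemma Rr_step x : (ml x < hW (mw x))%N -> Rr x = oQ (mw x) (ml x) (+) Rr (alpha x).
Proof.
move=> h; have [e1 e2] := ml_step piR piI pi1 h.
by rewrite /Rr e1 e2 big_ltn // ltnS ltnW.
Qed.

Lemma OP_split x : lk x = hV (lv x) -> Bb x (+) oP (lv x) (lk x) = OP (lv x).
Proof.
move=> e; rewrite /Bb /OP -big_nat_recr ?lk_ge1 //= big_add1 /= big_mkord.
by rewrite e.
Qed.

Lemma Bb_step x : (lk x < hV (lv x))%N -> Bb (alpha x) = Bb x (+) oP (lv x) (lk x).
Proof.
move=> h; have [e1 e2] := lv_step h.
by rewrite /Bb e1 e2 big_nat_recr ?lk_ge1.
Qed.

Lemma Bb_start x : lk x = 1%N -> Bb x = false.
Proof. by move=> e; rewrite /Bb e big_geq. Qed.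

Lemma gg_rec x : gg (alpha x) = gg x (+) oQ (mw x) (ml x) (+) oP (lv x) (lk x).
Proof.
have [hk|hk] := ltnP (lk x) (hV (lv x)).
- have [e1 e2] := lv_step hk.
  rewrite /gg e1 e2 Ss_step (Bb_step hk).
  have [hl|hl] := ltnP (ml x) (hW (mw x)).
  + have [f1 f2] := ml_step piR piI pi1 hl.
    have [_ g1 g2] := midx_spec KRP piS (alpha x).
    rewrite (@St_none (lv x) (lk x).+1 (mw x) (ml x).+1); first last.
    * by rewrite -f2 -f1 g2.
    * by rewrite -f2 -f1 g1.
    * by rewrite -f2 -f1 ml_le /= f2 ltnS ml_ge1.
    rewrite (Rr_step hl).
    move: (Rr (alpha x)) (Bb x) (Ss (lv x) (lk x)) (oQ (mw x) (ml x)) (oP (lv x) (lk x)).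
    by do 5! case.
  + have htop : ml x = hW (mw x) by apply/eqP; rewrite eqn_leq ml_le.
    have f1 := ml_top alpha_inj piR piI pi1 htop.
    have [_ g1 g2] := midx_spec KRP piS (alpha x).
    rewrite f1 e1 e2 in g1 g2.
    rewrite (St_one g1 g2) (Rr_top htop) (Rr_start f1).
    move: (OQ (mw (alpha x))) (Bb x) (Ss (lv x) (lk x)) (oQ (mw x) (ml x)) (oP (lv x) (lk x)).
    by do 5! case.
- have htk : lk x = hV (lv x) by apply/eqP; rewrite eqn_leq lk_le.
  have e2 := lk_top alpha_inj htk.
  rewrite /gg e2 Ss1 (Bb_start e2) htk Ss_all -htk -(OP_split htk).
  have [hl|hl] := ltnP (ml x) (hW (mw x)).
  + have [f1 f2] := ml_step piR piI pi1 hl.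
    have [_ g1 g2] := midx_spec KRP piS (alpha x).
    rewrite (@St_none (lv (alpha x)) 1 (mw x) (ml x).+1); first last.
    * by rewrite -f2 -f1 g2 e2.
    * by rewrite -f2 -f1 g1.
    * by rewrite -f2 -f1 ml_le /= f2 ltnS ml_ge1.
    rewrite (Rr_step hl).
    move: (Rr (alpha x)) (Bb x) (oQ (mw x) (ml x)) (oP (lv x) (lk x)).
    by do 4! case.
  + have htop : ml x = hW (mw x) by apply/eqP; rewrite eqn_leq ml_le.
    have f1 := ml_top alpha_inj piR piI pi1 htop.
    have [_ g1 g2] := midx_spec KRP piS (alpha x).
    rewrite f1 e2 in g1 g2.
    rewrite (St_one g1 g2) (Rr_top htop) (Rr_start f1).
    move: (OQ (mw (alpha x))) (Bb x) (oQ (mw x) (ml x)) (oP (lv x) (lk x)).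
    by do 4! case.
Qed.


Lemma gg_loc x : \forall y \near x, gg y = gg x.
Proof.
apply: filterS2 (midx_loc KRP piI piS x) (pidx_loc KRP x) => y e1 e2.
by rewrite /gg /Rr /Bb /P5.mw /P5.ml /P5.lv /P5.lk e1 e2.
Qed.

Definition sigma := projT1 (cid sigma_ex).
Definition tau := projT1 (cid (projT2 (cid sigma_ex))).
Lemma sigma_spec : [/\ cancel sigma tau, cancel tau sigma, continuous sigma, continuous tau &
    forall x y, Q (mw x) (ml x) (sigma x) /\ P (piV (lw y) (ll y)) (piK (lw y) (ll y)) (tau y)].
Proof. exact: (projT2 (cid (projT2 (cid sigma_ex)))). Qed.

Lemma sigmaQ x : Q (mw x) (ml x) (sigma x).
Proof. by case: sigma_spec => _ _ _ _ /(_ x (sigma x)) []. Qed.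

Lemma tauP y : P (piV (lw y) (ll y)) (piK (lw y) (ll y)) (tau y).
Proof. by case: sigma_spec => _ _ _ _ /(_ (tau y) y) []. Qed.

Lemma sigma_homeo : homeomorphism sigma.
Proof. by exists tau; case: sigma_spec. Qed.

Lemma sigma_cont : continuous sigma.
Proof. by case: sigma_spec. Qed.

Lemma sigma_img w l : (1 <= l <= hW w)%N -> sigma @` P (piV w l) (piK w l) = Q w l.
Proof.
move=> hl; apply/seteqP; split => [_ [x Px <-]|y Qy].
  by have [-> ->] := midx_of KRP piR piI piS hl Px; exact: sigmaQ.
have [e1 e2] := pidx_uniq KRQ hl Qy.
exists (tau y); first by rewrite e1 e2; exact: tauP.
by case: sigma_spec => _ -> _ _ _.
Qed.

Lemma gg_rec' x : gg (alpha x) = gg x (+) orient psi (sigma x) (+) orient phi x.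
Proof.
rewrite gg_rec; congr (_ (+) _ (+) _).
  exact: oQ_eq (midx_valid x) (sigmaQ x).
exact: oP_eq (pidx_spec KRP x).1 (lk_in KRP x).
Qed.


Lemma iter_cont (T : topologicalType) (f : T -> T) i : continuous f -> continuous (iter i f).
Proof.
move=> fc; elim: i => [|i IH] x /=; first exact: cvg_id.
exact: (continuous_comp (IH x) (fc (iter i f x))).
Qed.

Fixpoint Om (i : nat) (b : X) : isomT R :=
  if i is i'.+1 then icomp (icomp (psi (sigma (iter i' alpha b))) (Om i' b)) (iinvT (phi (iter i' alpha b)))
  else IsomT 0 (gg b).

Lemma Om_refl i b : refl (Om i b) = gg (iter i alpha b).
Proof.
elim: i => [|i IH] //=; rewrite IH gg_rec' /orient.
by case: (refl (psi _)); case: (gg _); case: (refl (phi _)).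
Qed.

Lemma sa_cont i : continuous (sigma \o iter i alpha).
Proof. by move=> x; apply: continuous_comp; [exact: (@iter_cont _ alpha i alpha_cont x)|exact: sigma_cont]. Qed.

Lemma Om_cont i b : icont_at (Om i) b.
Proof.
elim: i b => [|i IH] b /=.
  by apply: icont_at_loc; apply: filterS (gg_loc b) => y ->.
apply: (icont_at_comp (f := fun y => icomp (psi (sigma (iter i alpha y))) (Om i y))
   (g := fun y => iinvT (phi (iter i alpha y)))).
  apply: (icont_at_comp (f := fun y => psi (sigma (iter i alpha y))) (g := Om i)) => //.
  apply: (icont_at_pre (f := psi) (h := sigma \o iter i alpha)); first exact: sa_cont.
  exact: ((icontP psi).1 cpsi _).
apply: (icont_at_inv (f := fun y => phi (iter i alpha y))).
apply: (icont_at_pre (f := phi) (h := iter i alpha)); first exact: (@iter_cont _ alpha i alpha_cont).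
exact: ((icontP phi).1 cphi _).
Qed.

Definition Eb i b := \big[addb/false]_(j < i) refl (psi (sigma (iter j alpha b))).

Lemma Eb_step i b : Eb i.+1 b = Eb i b (+) refl (psi (sigma (iter i alpha b))).
Proof. by rewrite /Eb big_ord_recr. Qed.

Lemma near_pre (S T : topologicalType) (h : S -> T) x (Pp : T -> Prop) :
  {for x, continuous h} -> (\forall z \near h x, Pp z) -> \forall y \near x, Pp (h y).
Proof. by move=> hc H; exact: hc _ H. Qed.

Lemma refl_loc j b : \forall y \near b, refl (psi (sigma (iter j alpha y))) = refl (psi (sigma (iter j alpha b))).
Proof.
have H := (icontP psi).1 cpsi (sigma (iter j alpha b)) 1 ltr01.
by apply: filterS (near_pre (@sa_cont j b) H) => y /= [-> _].
Qed.

Lemma Eb_loc i b : \forall y \near b, Eb i y = Eb i b.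
Proof.
elim: i => [|i IH]; first by apply: nearW => y; rewrite /Eb !big_ord0.
apply: filterS2 IH (refl_loc i b) => y e1 e2.
by rewrite !Eb_step e1 e2.
Qed.

Definition M := \big[Num.max/0]_(v : V) ((hV v)%:R^-1 : R).

Lemma M_ge v : (hV v)%:R^-1 <= M.
Proof. rewrite /M; exact: le_bigmax. Qed.

Lemma M_gt0 : 0 < M.
Proof.
have [x0 _] := X_n0; apply: lt_le_trans (M_ge (lv x0)).
by rewrite invr_gt0 ltr0n (KR_pos KRP).
Qed.

Definition th v b := rot (Om (hV v) b).

Lemma th_approx v : exists th' : X -> R, [/\ forall x, \forall y \near x, th' y = th' x,
     forall x, dT (th v x - th' x) < M / 4 & forall x, `|th' x| <= 2^-1].
Proof.
have [pX cX hX zX] := X_cl.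
apply: P3.approx => //; first by rewrite divr_gt0 ?M_gt0.
by move=> x e e0; apply: filterS (Om_cont (hV v) x e0) => y [].
Qed.

Definition thq v := projT1 (cid (th_approx v)).
Lemma thq_spec v : [/\ forall x, \forall y \near x, thq v y = thq v x,
     forall x, dT (th v x - thq v x) < M / 4 & forall x, `|thq v x| <= 2^-1].
Proof. exact: (projT2 (cid (th_approx v))). Qed.

Definition s_ i b v : R := - (sg (Eb i b) * sg (Eb (hV v) b) * i%:R * thq v b / (hV v)%:R).
Definition bs x := P5.base KRP ainv x.
Definition om x := icomp (irot (s_ (lk x).-1 (bs x) (lv x))) (Om (lk x).-1 (bs x)).

Lemma om_cont : isom_continuous om.
Proof.
apply/icontP => x.
set i := (lk x).-1; set v := lv x.
have bc : {for x, continuous (iter i ainv)} by exact: (@iter_cont _ ainv i ainv_cont x).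
apply: (icont_at_near (g := fun y => icomp (irot (s_ i (iter i ainv y) v)) (Om i (iter i ainv y)))).
  by apply: filterS (pidx_loc KRP x) => y e; rewrite /om /bs /base /P5.lk /P5.lv e.
apply: (icont_at_comp (f := fun y => irot (s_ i (iter i ainv y) v)) (g := fun y => Om i (iter i ainv y))).
  apply: icont_at_loc.
  have [t1 _ _] := thq_spec v.
  have H1 := near_pre bc (t1 (iter i ainv x)).
  have H2 := near_pre bc (Eb_loc i (iter i ainv x)).
  have H3 := near_pre bc (Eb_loc (hV v) (iter i ainv x)).
  near=> y; rewrite /s_.
  have -> : thq v (iter i ainv y) = thq v (iter i ainv x) by near: y.
  have -> : Eb i (iter i ainv y) = Eb i (iter i ainv x) by near: y.
  have -> : Eb (hV v) (iter i ainv y) = Eb (hV v) (iter i ainv x) by near: y.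
  by [].
exact: (icont_at_pre (f := Om i) bc (Om_cont i _)).
Unshelve. all: end_near.
Qed.


Lemma distT_same (g1 g2 : isomT R) t : refl g1 = refl g2 ->
  distT (isom_app g1 t) (isom_app g2 t) = dT (rot g1 - rot g2).
Proof. by move=> e; rewrite distTE !isom_appE e; congr dT; ring. Qed.

Lemma cancel_phi (g f : isomT R) : icomp (icomp g (iinvT f)) f = g.
Proof. by rewrite -icompA icompV icomp0r. Qed.

Lemma bnd_small v z : `|z| <= 2^-1 -> dT (z / (hV v)%:R) <= M / 2.
Proof.
move=> hz; apply: le_trans (dT_le_abs _) _.
rewrite normrM normfV normr_nat [M / 2]mulrC.
apply: ler_pM => //.
exact: M_ge.
Qed.

Lemma hV_gt0 v : (0 < hV v)%N. Proof. exact: (KR_pos KRP). Qed.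

Lemma bs_step x : (lk x < hV (lv x))%N -> bs (alpha x) = bs x.
Proof.
move=> hk; have [e1 e2] := lv_step hk.
rewrite /bs /base e2 /=; have := lk_ge1 KRP x.
case: (lk x) => // n _; by rewrite -[LHS]/(iter n.+1 ainv (alpha x)) iterSr alphaK.
Qed.

Lemma bs_top x : lk x = hV (lv x) -> bs (alpha x) = alpha x.
Proof. by move=> hk; rewrite /bs /base (lk_top alpha_inj hk). Qed.

Lemma err x t : distT (isom_app (psi (sigma x)) (isom_app (om x) t))
    (isom_app (om (alpha x)) (isom_app (phi x) t)) <= 3 * M / 4.
Proof.
rewrite -!icompE.
have [b1 bv bx] := base_spec KRP alphaK ainvK x.
have Mp := M_gt0.
have [n en] : exists n, lk x = n.+1 by exists (lk x).-1; rewrite prednK // lk_ge1.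
rewrite en /= in bx.
have [thl thd thb] := thq_spec (lv x).
have hvp := hV_gt0 (lv x).
have [hk|hk] := ltnP (lk x) (hV (lv x)).
- have [e1 e2] := lv_step hk.
  rewrite /om (bs_step hk) e1 e2 en /= -/(bs x) bx.
  rewrite (icompA (irot _) (icomp _ _) (iinvT _)) cancel_phi.
  rewrite distT_same; last by rewrite /=; case: (refl (psi _)); case: (refl (Om _ _)).
  rewrite /s_ Eb_step bx /=.
  move: (refl (psi (sigma x))) (Eb n (bs x)) (Eb (hV (lv x)) (bs x)) => r1 e f.
  rewrite (_ : _ - _ = sg e * (sg r1 * (sg f * (thq (lv x) (bs x) / (hV (lv x))%:R)))); last first.
    by rewrite /sg /=; case: r1; case: e; case: f => /=; rewrite -natr1; ring.
  rewrite !dT_sgM; apply: le_trans (bnd_small _ (thb (bs x))) _; lra.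
- have htk : lk x = hV (lv x) by apply/eqP; rewrite eqn_leq lk_le.
  rewrite /om (bs_top htk) (lk_top alpha_inj htk) /=.
  rewrite /s_ mulr0 !mul0r oppr0 icomp0 en /=.
  have hv : hV (lv x) = n.+1 by rewrite -htk en.
  have ge : gg (alpha x) = refl (Om (hV (lv x)) (bs x)).
    by rewrite Om_refl hv /= bx.
  rewrite ge.
  have Oh : Om (hV (lv x)) (bs x) = icomp (icomp (psi (sigma x)) (Om n (bs x))) (iinvT (phi x)).
    by rewrite hv /= bx.
  have thE : th (lv x) (bs x) = rot (Om (hV (lv x)) (bs x)) by [].
  rewrite distT_same; last by rewrite Oh /=; case: (refl (psi _)); case: (refl (Om _ _)); case: (refl (phi _)).
  set th0 := thq (lv x) (bs x).
  have -> : rot (icomp (psi (sigma x)) (icomp (irot (- (sg (Eb n (bs x)) * sg (Eb (hV (lv x)) (bs x)) * n%:R * th0 / (hV (lv x))%:R))) (Om n (bs x)))) -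
      rot (icomp (IsomT 0 (refl (Om (hV (lv x)) (bs x)))) (phi x)) =
      (th (lv x) (bs x) - th0) + th0 / (hV (lv x))%:R.
    rewrite thE Oh hv Eb_step /= bx.
    move: (refl (psi (sigma x))) (Eb n (bs x)) (refl (Om n (bs x))) (refl (phi x)) => r1 e r2 r3.
    have hk0 : (n.+1%:R : R) != 0 by rewrite pnatr_eq0.
    by rewrite /sg; case: r1; case: e; case: r2; case: r3 => /=; rewrite -natr1; field; rewrite natr1.
  apply: le_trans (dT_add _ _) _.
  have := thd (bs x); have := bnd_small (lv x) (thb (bs x)); lra.
Qed.


Lemma main_sec : exists (sigma0 : X -> Y) (omega : X -> isomT R),
    [/\ homeomorphism sigma0, isom_continuous omega,
        (forall w l, (1 <= l <= hW w)%N ->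
           sigma0 @` P (piV w l) (piK w l) = Q w l) &
        sup [set r | exists x t, r = distT
               (isom_app (psi (sigma0 x)) (isom_app (omega x) t))
               (isom_app (omega (alpha x)) (isom_app (phi x) t))]
        < \big[Num.max/0]_(v : V) ((hV v)%:R)^-1].
Proof.
exists sigma, om; split.
- exact: sigma_homeo.
- exact: om_cont.
- exact: sigma_img.
- have Mp := M_gt0.
  change (sup [set r | exists x t, r = distT
               (isom_app (psi (sigma x)) (isom_app (om x) t))
               (isom_app (om (alpha x)) (isom_app (phi x) t))] < M).
  apply: (@le_lt_trans _ _ (3 * M / 4)); last lra.
  apply: ge_sup.
    have [x0 _] := X_n0.
    by exists (distT (isom_app (psi (sigma x0)) (isom_app (om x0) 0))
               (isom_app (om (alpha x0)) (isom_app (phi x0) 0))), x0, 0.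
  by move=> _ [x [t ->]]; exact: err.
Qed.

End Main.

Theorem lemma4p8_aux (R : realType)
  (X : pseudoMetricType R) (alpha : X -> X)
  (Y : pseudoMetricType R) (beta : Y -> Y)
  (phi : X -> isomT R) (psi : Y -> isomT R)
  (V : finType) (hV : V -> nat) (P : V -> nat -> set X)
  (W : finType) (hW : W -> nat) (Q : W -> nat -> set Y)
  (piV : W -> nat -> V) (piK : W -> nat -> nat) :
  cantor_minimal_system alpha -> cantor_minimal_system beta ->
  isom_continuous phi -> isom_continuous psi ->
  KR_partition alpha hV P -> KR_partition beta hW Q ->
  orient_constant phi hV P -> orient_constant psi hW Q ->
  (forall w l, (1 <= l <= hW w)%N -> (1 <= piK w l <= hV (piV w l))%N) ->
  (forall w l w' l', (1 <= l <= hW w)%N -> (1 <= l' <= hW w')%N ->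
     piV w l = piV w' l' -> piK w l = piK w' l' -> w = w' /\ l = l') ->
  (forall v k, (1 <= k <= hV v)%N ->
     exists w l, [/\ (1 <= l <= hW w)%N, piV w l = v & piK w l = k]) ->
  (forall w l, (1 <= l <= (hW w).-1)%N ->
     P (piV w l.+1) (piK w l.+1) = alpha @` P (piV w l) (piK w l)) ->
  (forall v x (y : W -> Y), P v 1%N x -> (forall w, Q w 1%N (y w)) ->
     orient_tower phi alpha (hV v) x =
     \big[addb/false]_(w : W | piV w 1%N == v) orient_tower psi beta (hW w) (y w)) ->
  exists (sigma : X -> Y) (omega : X -> isomT R),
    [/\ homeomorphism sigma, isom_continuous omega,
        (forall w l, (1 <= l <= hW w)%N ->
           sigma @` P (piV w l) (piK w l) = Q w l) &
        sup [set r | exists x t, r = distT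
               (isom_app (psi (sigma x)) (isom_app (omega x) t))
               (isom_app (omega (alpha x)) (isom_app (phi x) t))]
        < \big[Num.max/0]_(v : V) ((hV v)%:R)^-1].
Proof.
move=> h1 h2 h3 h4 h5 h6 h7 h8 h9 h10 h11 h12 h13.
exact: (main_sec h1 h2 h3 h4 h5 h6 h7 h8 h9 h10 h11 h12 h13).
Qed.


End P6.

Theorem lemma4p8 (R : realType)
  (X : pseudoMetricType R) (alpha : X -> X)
  (Y : pseudoMetricType R) (beta : Y -> Y)
  (phi : X -> isomT R) (psi : Y -> isomT R)
  (V : finType) (hV : V -> nat) (P : V -> nat -> set X)
  (W : finType) (hW : W -> nat) (Q : W -> nat -> set Y)
  (piV : W -> nat -> V) (piK : W -> nat -> nat) :
  cantor_minimal_system alpha -> cantor_minimal_system beta ->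
  isom_continuous phi -> isom_continuous psi ->
  KR_partition alpha hV P -> KR_partition beta hW Q ->
  orient_constant phi hV P -> orient_constant psi hW Q ->
  (* pi : Q -> P, (w,l) |-> (piV w l, piK w l), is a bijection of the index sets *)
  (forall w l, (1 <= l <= hW w)%N -> (1 <= piK w l <= hV (piV w l))%N) ->
  (forall w l w' l', (1 <= l <= hW w)%N -> (1 <= l' <= hW w')%N ->
     piV w l = piV w' l' -> piK w l = piK w' l' -> w = w' /\ l = l') ->
  (forall v k, (1 <= k <= hV v)%N ->
     exists w l, [/\ (1 <= l <= hW w)%N, piV w l = v & piK w l = k]) ->
  (* (1) *)
  (forall w l, (1 <= l <= (hW w).-1)%N ->
     P (piV w l.+1) (piK w l.+1) = alpha @` P (piV w l) (piK w l)) ->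
  (* (2) *)
  (forall v x (y : W -> Y), P v 1%N x -> (forall w, Q w 1%N (y w)) ->
     orient_tower phi alpha (hV v) x =
     \big[addb/false]_(w : W | piV w 1%N == v) orient_tower psi beta (hW w) (y w)) ->
  exists (sigma : X -> Y) (omega : X -> isomT R),
    [/\ homeomorphism sigma, isom_continuous omega,
        (forall w l, (1 <= l <= hW w)%N ->
           sigma @` P (piV w l) (piK w l) = Q w l) &
        sup [set r | exists x t, r = distT
               (isom_app (psi (sigma x)) (isom_app (omega x) t))
               (isom_app (omega (alpha x)) (isom_app (phi x) t))]
        < \big[Num.max/0]_(v : V) ((hV v)%:R)^-1].
Proof.
exact: P6.lemma4p8_aux.
Qed.
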